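(* For every $q\ge0$, the $W(m,n)$-module $\mathcal V(\theta_q)$ is generated by the single vector $y_n\otimes(e^*_{m+n})^q\otimes1_{\mathcal E}$.
   Context: $\mathbb F$ algebraically closed of characteristic $0$, $m,n\ge1$. $\mathcal R=\mathbb F[x_1,\dots,x_m]\otimes\Lambda(y_1,\dots,y_n)$ ($x_i$ even, $y_s$ odd). $\mathfrak g=W(m,n)$ the Lie superalgebra of superderivations of $\mathcal R$, free over $\mathcal R$ on even $\partial_i$ and odd $D_t$, with $\mathfrak g_0\cong\mathfrak{gl}(m|n)$ via $x_i\partial_j\mapsto E_{ij}$, $x_iD_s\mapsto E_{i,m+s}$, $y_r\partial_j\mapsto E_{m+r,j}$, $y_rD_s\mapsto E_{m+r,m+s}$; weights $\epsilon_i,\delta_s$ as usual. $\mathcal E=\sum_{i=1}^m\epsilon_i-\sum_{j=1}^n\delta_j$ and $\theta_q=\mathcal E-q\delta_n$. $V^*$ is the dual of the natural module $V=\mathbb F^{m|n}$ with dual basis $e^*_i$ ($e_i^*$ even iff $i\le m$), action $(X.f)(v)=-(-1)^{\wp(X)\wp(f)}f(Xv)$; $\Omega^q(V^* )$ its $q$-th super-Grassmann power (tensor algebra modulo $u\otimes w+(-1)^{\wp(u)\wp(w)}w\otimes u$); $\mathbb F_{\mathcal E}=\mathbb F1_{\mathcal E}$ the one-dimensional $\mathfrak{gl}(m|n)$-module of weight $\mathcal E$. Then $L^0(\theta_q)=\Omega^q(V^* )\otimes\mathbb F_{\mathcal E}$ is irreducible of highest weight $\theta_q$. $\mathcal V(\theta_q)=\mathcal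 R\otimes L^0(\theta_q)$ is the mixed-product module with action (homogeneous $f,g$, $\xi$ the $\mathfrak g_0$-action): $f\partial_i.(g\otimes v)=f\partial_i(g)\otimes v+\sum_j\partial_j(f)g\otimes\xi(x_j\partial_i)v+(-1)^{\wp(f)+\wp(g)+1}\sum_jD_j(f)g\otimes\xi(y_j\partial_i)v$, $fD_i.(g\otimes v)=fD_i(g)\otimes v+(-1)^{\wp(g)}\sum_j\partial_j(f)g\otimes\xi(x_jD_i)v+(-1)^{\wp(f)+1}\sum_jD_j(f)g\otimes\xi(y_jD_i)v$. *)

(* Defs.v *)
From HB Require Import structures.
From mathcomp Require Import all_boot all_order all_algebra.
From mathcomp Require Import finmap.
From mathcomp Require Import monalg.

Set Implicit Arguments.
Unset Strict Implicit.
Unset Printing Implicit Defensive.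

Import GRing.Theory.
Local Open Scope ring_scope.

Section WmnModule.
Variables (F : fieldType) (m n q : nat).

(* The superalgebra R = F[x_1..x_m] (x) Lambda(y_1..y_n).                  *)
(* Basis monomial (a, S) stands for x^a * y_{s_1} y_{s_2} ... y_{s_k}      *)
(* with s_1 < s_2 < ... < s_k the elements of S (indices are 0-based:      *)
(* x_{i+1} <-> i : 'I_m, y_{s+1} <-> s : 'I_n).                            *)
Definition Rmon := ({ffun 'I_m -> nat} * {set 'I_n})%type.

Definition Rpar (f : Rmon) : bool := odd #|f.2|.

Definition Rterm := (F * Rmon)%type.

(* product of basis monomials, with the supercommutation sign *)
Definition Rmul (f g : Rmon) : Rterm :=
  (if [disjoint f.2 & g.2] then
     (-1) ^+ #|[set st : 'I_n * 'I_n |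
                 (st.1 \in f.2) && (st.2 \in g.2) && (st.2 < st.1)%N]|
   else 0,
   ([ffun i => f.1 i + g.1 i], f.2 :|: g.2)).

Definition lmulR (f : Rmon) (r : Rterm) : Rterm :=
  let s := Rmul f r.2 in (r.1 * s.1, s.2).
Definition rmulR (r : Rterm) (g : Rmon) : Rterm :=
  let s := Rmul r.2 g in (r.1 * s.1, s.2).

Definition Rdx (i : 'I_m) (g : Rmon) : Rterm :=
  ((g.1 i)%:R, ([ffun k => if k == i then (g.1 k).-1 else g.1 k], g.2)).

(* the odd (left) superderivation D_j = d/dy_j *)
Definition RDy (j : 'I_n) (g : Rmon) : Rterm :=
  (if j \in g.2 then (-1) ^+ #|[set s in g.2 | (s < j)%N]| else 0,
   (g.1, g.2 :\ j)).

(* Tensor power (V^* )^{(x) q}: basis words e^*_{w_1} (x) ... (x) e^*_{w_q}. *)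
(* Index c : 'I_(m+n) stands for e^*_{c+1}; it is odd iff m <= c.          *)
Definition word := (q.-tuple 'I_(m + n))%type.
Definition ipar (c : 'I_(m + n)) : bool := (m <= c)%N.

(* The space R (x) (V^* )^{(x) q} (x) F_E, with basis Rmon x word.          *)
Definition Kb := (Rmon * word)%type.
Definition Vsp := {malg F[Kb]}.

Definition bvec (c : F) (g : Rmon) (w : word) : Vsp := << c *g (g, w) >>.

(* supertrace: the weight E = sum eps_i - sum delta_j evaluated on E_ab *)
Definition str (a b : 'I_(m + n)) : F :=
  if a == b then (if ipar a then -1 else 1) else 0.

Definition wset (w : word) (k : 'I_q) (b : 'I_(m + n)) : word :=
  [tuple if j == k then b else tnth w j | j < q].

(* action xi(E_ab) of gl(m|n) on (V^* )^{(x) q} (x) F_E, applied to the  *)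
(* R-factor r (x) w.  E_ab . e^*_c = - (-1)^{p(E_ab) p(c)} delta_ac e^*_b  *)
(* (from (X.f)(v) = -(-1)^{p(X)p(f)} f(Xv)), extended to the tensor power *)
(* with the Koszul sign, plus the character E (the supertrace).            *)
Definition xiV (a b : 'I_(m + n)) (r : Rterm) (w : word) : Vsp :=
  r.1 *:
  (\sum_(k < q)
     (if tnth w k == a then
        bvec ((-1) ^+ ((ipar a (+) ipar b) &&
                       odd (\sum_(l < q | (l < k)%N) ipar (tnth w l)))
              * (- (-1) ^+ ((ipar a (+) ipar b) && ipar a)))
             r.2 (wset w k b)
      else 0)
   + bvec (str a b) r.2 w).

Definition xI (i : 'I_m) : 'I_(m + n) := lshift n i.
Definition yI (s : 'I_n) : 'I_(m + n) := rshift m s.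

(* The mixed-product action of f d_i (f a basis monomial) on g (x) w. *)
Definition actd_b (f : Rmon) (i : 'I_m) (k : Kb) : Vsp :=
  let g := k.1 in let w := k.2 in
  let t1 := lmulR f (Rdx i g) in
  bvec t1.1 t1.2 w
  + \sum_(j < m) xiV (xI j) (xI i) (rmulR (Rdx j f) g) w
  + (-1) ^+ (Rpar f + Rpar g + 1)
    *: \sum_(j < n) xiV (yI j) (xI i) (rmulR (RDy j f) g) w.

(* The mixed-product action of f D_i (f a basis monomial) on g (x) w. *)
Definition actD_b (f : Rmon) (i : 'I_n) (k : Kb) : Vsp :=
  let g := k.1 in let w := k.2 in
  let t1 := lmulR f (RDy i g) in
  bvec t1.1 t1.2 w
  + (-1) ^+ (Rpar g)
    *: \sum_(j < m) xiV (xI j) (yI i) (rmulR (Rdx j f) g) w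
  + (-1) ^+ (Rpar f + 1)
    *: \sum_(j < n) xiV (yI j) (yI i) (rmulR (RDy j f) g) w.

Definition linext (op : Kb -> Vsp) (v : Vsp) : Vsp :=
  \sum_(k <- msupp v) v@_k *: op k.

Definition actd (f : Rmon) (i : 'I_m) : Vsp -> Vsp := linext (actd_b f i).
Definition actD (f : Rmon) (i : 'I_n) : Vsp -> Vsp := linext (actD_b f i).

(* Spanning set of R (x) K, K = kernel of (V^* )^{(x) q} -> Omega^q(V^* ):  *)
(* g (x) (a (x) (u (x) w + (-1)^{p(u)p(w)} w (x) u) (x) b).               *)
Definition wswap (w : word) (k l : 'I_q) : word :=
  [tuple tnth w (if j == k then l else if j == l then k else j) | j < q].

Definition kerel (g : Rmon) (w : word) (k l : 'I_q) : Vsp :=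
  bvec 1 g w
  + bvec ((-1) ^+ (ipar (tnth w k) && ipar (tnth w l))) g (wswap w k l).

(* W(m,n) is spanned by the f d_i, f D_i with f a basis monomial.          *)
Definition W_stable_subspace (P : Vsp -> Prop) : Prop :=
  [/\ P 0,
      (forall u v, P u -> P v -> P (u + v)),
      (forall (c : F) u, P u -> P (c *: u)),
      (forall f i u, P u -> P (actd f i u)) &
      (forall f i u, P u -> P (actD f i u))].

(* V(theta_q) = R (x) Omega^q(V^* ) (x) F_E is the quotient of Vsp by R (x) K.
   [v0] generates the quotient module iff every W(m,n)-stable subspace of
   Vsp containing R (x) K and v0 is the whole space.                        *)
Definition generates_Vtheta (v0 : Vsp) : Prop :=
  forall P : Vsp -> Prop,
    W_stable_subspace P ->
    (forall g w (k l : 'I_q), val l = (val k).+1 -> P (kerel g w k l)) ->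
    P v0 -> forall v, P v.

End WmnModule.

(* the index m+n (0-based: m+n-1), i.e. e^*_{m+n} *)
Definition lastI (m n : nat) (Hn : (0 < n)%N) : 'I_(m + n) :=
  Ordinal (eq_leq (prednK (ltn_addl m Hn))
           : ((m + n).-1 < m + n)%N).

Definition gen_vec (F : fieldType) (m n q : nat) (Hn : (0 < n)%N)
  : Vsp F m n q :=
  bvec 1 ([ffun => 0%N], [set s : 'I_n | val s == n.-1])
       [tuple of nseq q (lastI m Hn)].

(* Main.v *)
Require Import Defs.
From HB Require Import structures.
From mathcomp Require Import all_boot all_order all_algebra.
From mathcomp Require Import finmap monalg.
Set Implicit Arguments.
Unset Strict Implicit.
Unset Printing Implicit Defensive.
Import GRing.Theory.
Local Open Scope ring_scope.

Section Basics.
Variables (F : fieldType) (m n q : nat).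
Local Notation V := (Vsp F m n q).
Local Notation Rmon := (Rmon m n).
Local Notation word := (word m n q).

Definition one0 : Rmon := ([ffun => 0%N], set0).
Definition ymon (s : 'I_n) : Rmon := ([ffun => 0%N], [set s]).

Lemma bvec0 (g : Rmon) (w : word) : bvec (0 : F) g w = 0.
Proof. rewrite /bvec. exact: (@monalgU0 (Kb m n q) F (g, w)). Qed.
Lemma bvecZ (c : F) (g : Rmon) (w : word) : bvec c g w = c *: bvec 1 g w.
Proof.
apply/malgP => k.
rewrite /bvec mcoeffZ.
rewrite [LHS]mcoeffU [in RHS]mcoeffU.
by case: eqP => _; rewrite ?mulr1 ?mulr0.
Qed.
Lemma linextU (op : Kb m n q -> V) g w : linext op (bvec 1 g w) = op (g, w).
Proof.
rewrite /linext /bvec msuppU oner_eq0 big_seq_fset1.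
by rewrite mcoeffUU scale1r.
Qed.
Lemma xiV0 a b (r : Rterm F m n) (w : word) : r.1 = 0 -> xiV a b r w = 0.
Proof. by rewrite /xiV => ->; rewrite scale0r. Qed.

Lemma Rmul1 (g : Rmon) : Rmul F one0 g = (1, g).
Proof.
case: g => a S; rewrite /Rmul /one0 /=.
have -> : [disjoint set0 & S] by apply/pred0P => x; rewrite !inE.
have -> : [set st : 'I_n * 'I_n | (st.1 \in set0) && (st.2 \in S) & (st.2 < st.1)%N] = set0.
  by apply/setP => x; rewrite !inE.
rewrite cards0 expr0 set0U; congr (_, (_, _)).
by apply/ffunP => i; rewrite !ffunE.
Qed.

Lemma RDy_ymon (s : 'I_n) : RDy F s (ymon s) = (1, one0).
Proof.
rewrite /RDy /ymon /one0 /= set11.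
have -> : [set s0 in [set s] | (s0 < s)%N] = set0.
  by apply/setP => x; rewrite !inE; case: eqP => // ->; rewrite ltnn andbF.
by rewrite cards0 expr0 setDv.
Qed.

Lemma RDy_ymon_ne (s j : 'I_n) : j != s -> (RDy F j (ymon s)).1 = 0.
Proof. by move=> ne; rewrite /RDy /ymon /= inE (negPf ne). Qed.

Lemma Rdx_ymon (s : 'I_n) j : (Rdx F j (ymon s)).1 = 0.
Proof. by rewrite /Rdx /ymon /= ffunE. Qed.
Lemma rmulR_eq0 (r : Rterm F m n) g : r.1 = 0 -> (rmulR r g).1 = 0.
Proof. by rewrite /rmulR => ->; rewrite mul0r. Qed.

Lemma actd_ymon (s : 'I_n) (i : 'I_m) (g : Rmon) (w : word) :
  actd (ymon s) i (bvec 1 g w) =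
  bvec (lmulR (ymon s) (Rdx F i g)).1 (lmulR (ymon s) (Rdx F i g)).2 w
  + (-1) ^+ (Rpar (ymon s) + Rpar g + 1) *: xiV (yI m s) (xI n i) (1, g) w.
Proof.
rewrite /actd linextU /actd_b.
rewrite [X in _ + X + _]big1 ?addr0; last first.
  by move=> j _; rewrite xiV0 // rmulR_eq0 // Rdx_ymon.
congr (_ + _ *: _).
rewrite (bigD1 s) // big1 ?addr0; last first.
  by move=> j ne; rewrite xiV0 // rmulR_eq0 // RDy_ymon_ne.
by rewrite RDy_ymon /rmulR Rmul1 /= mul1r addr0.
Qed.

Lemma actD_ymon (s : 'I_n) (i : 'I_n) (g : Rmon) (w : word) :
  actD (ymon s) i (bvec 1 g w) =
  bvec (lmulR (ymon s) (RDy F i g)).1 (lmulR (ymon s) (RDy F i g)).2 w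
  + (-1) ^+ (Rpar (ymon s) + 1) *: xiV (yI m s) (yI m i) (1, g) w.
Proof.
rewrite /actD linextU /actD_b.
rewrite [X in _ + _ *: X + _]big1 ?scaler0 ?addr0; last first.
  by move=> j _; rewrite xiV0 // rmulR_eq0 // Rdx_ymon.
congr (_ + _ *: _).
rewrite (bigD1 s) // big1 ?addr0; last first.
  by move=> j ne; rewrite xiV0 // rmulR_eq0 // RDy_ymon_ne.
by rewrite RDy_ymon /rmulR Rmul1 /= mul1r addr0.
Qed.
Lemma xiV_none (a b : 'I_(m + n)) (r : Rterm F m n) (w : word) :
  (forall t, tnth w t != a) -> xiV a b r w = r.1 *: bvec (@str F m n a b) r.2 w.
Proof.
move=> hw; rewrite /xiV big1 ?add0r // => t _.
by rewrite (negPf (hw t)).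
Qed.

Lemma str_xx (i : 'I_m) : @str F m n (xI n i) (xI n i) = 1.
Proof. by rewrite /str eqxx /ipar /= leqNgt ltn_ord. Qed.

Lemma str_ne (a b : 'I_(m + n)) : a != b -> @str F m n a b = 0.
Proof. by rewrite /str => /negPf ->. Qed.

Lemma Rmul_x (a : {ffun 'I_m -> nat}) (g : Rmon) :
  Rmul F (a, set0) g = (1, ([ffun k => a k + g.1 k], g.2)).
Proof.
case: g => b S; rewrite /Rmul /=.
have -> : [disjoint set0 & S] by apply/pred0P => x; rewrite !inE.
have -> : [set st : 'I_n * 'I_n | (st.1 \in set0) && (st.2 \in S) & (st.2 < st.1)%N] = set0.
  by apply/setP => x; rewrite !inE.
by rewrite cards0 expr0 set0U.
Qed.

Definition xpow (i : 'I_m) (k : nat) : Rmon :=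
  ([ffun j => if j == i then k else 0%N], set0).
Definition addx (i : 'I_m) (k : nat) (g : Rmon) : Rmon :=
  ([ffun j => (if j == i then k else 0%N) + g.1 j], g.2).

Lemma Rdx_xpow (i : 'I_m) k : Rdx F i (xpow i k.+1) = (k.+1%:R, xpow i k).
Proof.
rewrite /Rdx /xpow ffunE eqxx; congr (_, (_, _)).
by apply/ffunP => l; rewrite !ffunE; case: eqP.
Qed.

Lemma rmulR_x (c : F) (a : {ffun 'I_m -> nat}) (g : Rmon) :
  rmulR (c, (a, set0)) g = (c, ([ffun k => a k + g.1 k], g.2)).
Proof. by rewrite /rmulR Rmul_x mulr1. Qed.

Lemma actd_xpow (i : 'I_m) (k : nat) (g : Rmon) (w : word) :
  g.1 i = 0%N -> (forall t, tnth w t != xI n i) ->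
  actd (xpow i k.+1) i (bvec (1 : F) g w) = (k.+1)%:R *: bvec 1 (addx i k g) w.
Proof.
move=> gi hw; rewrite /actd linextU /actd_b.
have -> : (lmulR (xpow i k.+1) (Rdx F i (g, w).1)).1 = 0.
  by rewrite /lmulR /Rdx /= gi mul0r.
rewrite bvec0 add0r.
rewrite [X in _ + _ *: X]big1 ?scaler0 ?addr0; last first.
  by move=> j _; rewrite xiV0 // rmulR_eq0 // /RDy /xpow /= inE.
rewrite (bigD1 i) // big1 ?addr0; last first.
  move=> j ne; rewrite xiV0 // rmulR_eq0 // /Rdx /xpow /= ffunE.
  by rewrite (negPf ne).
rewrite /= addr0 xiV_none; last exact: hw.
rewrite str_xx Rdx_xpow rmulR_x /addx.
have E : [ffun k0 => [ffun j => if j == i then k else 0%N] k0 + g.1 k0] =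
  [ffun j => (if j == i then k else 0%N) + g.1 j].
  by apply/ffunP => l; rewrite !ffunE.
rewrite E.
reflexivity.
Qed.
Definition xymon (i : 'I_m) (s : 'I_n) : Rmon :=
  ([ffun j => if j == i then 1%N else 0%N], [set s]).

Lemma Rdx_xymon (i : 'I_m) s : Rdx F i (xymon i s) = (1, ymon s).
Proof.
rewrite /Rdx /xymon /ymon ffunE eqxx; congr (_, (_, _)).
by apply/ffunP => l; rewrite !ffunE; case: eqP.
Qed.

Lemma yI_xI (s : 'I_n) (i : 'I_m) : yI m s != xI n i.
Proof.
apply/negP => /eqP/(congr1 val) /= E.
by have := ltn_ord i; rewrite -E ltnNge leq_addr.
Qed.

Lemma actd_xymon (i : 'I_m) (s : 'I_n) (g : Rmon) (w : word) :
  g.1 i = 0%N -> (forall t, tnth w t != xI n i) -> (forall t, tnth w t != yI m s) ->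
  actd (xymon i s) i (bvec (1 : F) g w) =
  (Rmul F (ymon s) g).1 *: bvec 1 (Rmul F (ymon s) g).2 w.
Proof.
move=> gi hw hws; rewrite /actd linextU /actd_b.
have -> : (lmulR (xymon i s) (Rdx F i (g, w).1)).1 = 0.
  by rewrite /lmulR /Rdx /= gi mul0r.
rewrite bvec0 add0r.
rewrite [X in _ + _ *: X]big1 ?scaler0 ?addr0; last first.
  move=> j _; have [->|ne] := eqVneq j s.
    rewrite xiV_none; last exact: hws.
    by rewrite str_ne ?yI_xI // bvec0 scaler0.
  rewrite xiV0 // rmulR_eq0 // /RDy /xymon /= inE.
  by rewrite (negPf ne).
rewrite (bigD1 i) // big1 ?addr0; last first.
  move=> j ne; rewrite xiV0 // rmulR_eq0 // /Rdx /xymon /= ffunE.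
  by rewrite (negPf ne).
rewrite /= addr0 xiV_none; last exact: hw.
rewrite str_xx Rdx_xymon /rmulR mul1r.
reflexivity.
Qed.
Lemma actD_one0 (s : 'I_n) (w : word) :
  actD one0 s (bvec (1 : F) (ymon s) w) = bvec 1 one0 w.
Proof.
rewrite /actD linextU /actD_b.
rewrite [X in _ + _ *: X + _]big1 ?scaler0 ?addr0; last first.
  by move=> j _; rewrite xiV0 // rmulR_eq0 // /Rdx /one0 /= ffunE.
rewrite [X in _ + _ *: X]big1 ?scaler0 ?addr0; last first.
  by move=> j _; rewrite xiV0 // rmulR_eq0 // /RDy /one0 /= inE.
rewrite RDy_ymon /lmulR Rmul1 /= mulr1.
reflexivity.
Qed.
End Basics.

Lemma subsub (U : zmodType) (x y : U) : x - (x - y) = y.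
Proof. by rewrite opprB addrC addrNK. Qed.

Lemma sum_lt (q t : nat) : (t <= q)%N -> (\sum_(l < q | (l < t)%N) 1 = t)%N.
Proof.
elim: t => [|t IHt] ht.
  by rewrite big_pred0 // => l; rewrite ltn0.
rewrite (bigD1 (Ordinal ht)) /=; last exact: ltnSn.
rewrite add1n; congr _.+1; rewrite -[RHS](IHt (ltnW ht)).
apply: eq_bigl => l; rewrite ltnS leq_eqVlt.
have [E|ne] := eqVneq l (Ordinal ht).
  by rewrite E /= eqxx ltnn.
have -> : (val l == t) = false.
  by apply/negbTE; apply: contra ne => /eqP E'; apply/eqP/val_inj.
by rewrite andbT.
Qed.

Section Main.
Variables (F : fieldType) (m n q : nat).
Hypothesis HF : [pchar F] =i pred0.
Local Notation V := (Vsp F m n q).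
Local Notation Rmon := (Rmon m n).
Local Notation word := (word m n q).
Variable P : V -> Prop.
Hypothesis hP : W_stable_subspace P.

Lemma P0 : P 0. Proof. by case: hP => H _ _ _ _. Qed.
Lemma PD u v : P u -> P v -> P (u + v). Proof. by case: hP => _ H _ _ _; apply: H. Qed.
Lemma PZ (c : F) u : P u -> P (c *: u). Proof. by case: hP => _ _ H _ _; apply: H. Qed.
Lemma Pd f i u : P u -> P (actd f i u). Proof. by case: hP => _ _ _ H _; apply: H. Qed.
Lemma PDy f i u : P u -> P (actD f i u). Proof. by case: hP => _ _ _ _ H; apply: H. Qed.
Lemma PN u : P u -> P (- u). Proof. by move=> Pu; rewrite -scaleN1r; apply: PZ. Qed.
Lemma PB u v : P u -> P v -> P (u - v). Proof. by move=> Pu Pv; apply: PD => //; apply: PN. Qed.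
Lemma PZinv (c : F) u : c != 0 -> P (c *: u) -> P u.
Proof. by move=> c0 /(PZ c^-1); rewrite scalerA mulVf // scale1r. Qed.
Lemma Psum (I : Type) (r : seq I) (Q : pred I) (f : I -> V) :
  (forall i, Q i -> P (f i)) -> P (\sum_(i <- r | Q i) f i).
Proof. by move=> H; apply: (big_ind P) => //; [exact: P0 | exact: PD]. Qed.
Lemma Pbvec (c : F) g w : P (bvec 1 g w) -> P (bvec c g w).
Proof. by move=> H; rewrite bvecZ; apply: PZ. Qed.

Lemma natr_neq0 k : (k.+1%:R : F) != 0.
Proof. by have /pcharf0P -> := HF. Qed.
Variables (s0 : 'I_n) (i0 : 'I_m).
Local Notation cq := ([tuple of nseq q (yI m s0)] : word).
Hypothesis Hv0 : P (bvec 1 (ymon m s0) cq).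

Lemma cq_x (i : 'I_m) t : tnth cq t != xI n i.
Proof. by rewrite tnth_nseq yI_xI. Qed.

Lemma cq_y (s : 'I_n) t : s != s0 -> tnth cq t != yI m s.
Proof.
move=> ne; rewrite tnth_nseq; apply/negP => /eqP /rshift_inj E.
by rewrite E eqxx in ne.
Qed.

Lemma Hy (S : {set 'I_n}) : P (bvec 1 ([ffun => 0%N], S) cq).
Proof.
move: {2}#|S :\ s0| (erefl #|S :\ s0|) => k; elim: k S => [|k IH] S hk.
  move/eqP: hk; rewrite cards_eq0 setD_eq0 subset1 => /orP [] /eqP ->.
    exact: Hv0.
  have := PDy (one0 m n) s0 Hv0; rewrite actD_one0.
  by [].
have : S :\ s0 != set0 by rewrite -card_gt0 hk.
case/set0Pn => s; rewrite !inE => /andP [ne sS].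
have hk' : #|(S :\ s) :\ s0| = k.
  move: hk; rewrite (cardsD1 s (S :\ s0)) !inE ne sS add1n => -[<-].
  by rewrite !setDDl setUC.
have := Pd (xymon i0 s) i0 (IH _ hk').
rewrite actd_xymon; first last.
- by move=> t; apply: cq_y.
- by move=> t; apply: cq_x.
- by rewrite ffunE.
move=> H.
have sS' : s \notin S :\ s by rewrite !inE eqxx.
have E : Rmul F (ymon m s) ([ffun => 0%N], S :\ s) =
  ((-1) ^+ #|[set st : 'I_n * 'I_n | (st.1 \in [set s]) && (st.2 \in S :\ s)
                 & (st.2 < st.1)%N]|, ([ffun => 0%N], S)).
  rewrite /Rmul /ymon /=.
  have -> : [disjoint [set s] & S :\ s].
    by rewrite disjoints1.
  rewrite setD1K //; congr (_, (_, _)).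
  by apply/ffunP => l; rewrite !ffunE.
rewrite E in H.
exact: (PZinv (negbT (signr_eq0 _ _)) H).
Qed.

Lemma Hq (g : Rmon) : P (bvec 1 g cq).
Proof.
case: g => a S.
have step : forall j, (j <= m)%N ->
    P (bvec 1 ([ffun l : 'I_m => if (l < j)%N then a l else 0%N], S) cq).
  elim => [|j IH] hj.
    have -> : [ffun l : 'I_m => if (l < 0)%N then a l else 0%N] = [ffun => 0%N].
      by apply/ffunP => l; rewrite !ffunE.
    exact: Hy.
  pose i := Ordinal hj.
  have := Pd (xpow n i (a i).+1) i (IH (ltnW hj)).
  rewrite actd_xpow; first last.
  - by move=> t; apply: cq_x.
  - by rewrite ffunE ltnn.
  move/(PZinv (natr_neq0 _)).
  have -> : addx i (a i) ([ffun l : 'I_m => if (l < j)%N then a l else 0%N], S) =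
            ([ffun l : 'I_m => if (l < j.+1)%N then a l else 0%N], S).
    rewrite /addx; congr (_, _).
    apply/ffunP => l; rewrite !ffunE.
    have [->|ne] := eqVneq l i.
      by rewrite /= ltnn ltnSn; apply: addn0.
    have ne' : (val l == j) = false.
      by apply/negbTE; apply: contra ne => /eqP E; apply/eqP/val_inj.
    have E : (l < j.+1)%N = (l < j)%N by rewrite ltnS leq_eqVlt ne'.
    by rewrite E.
  by [].
have := step m (leqnn m).
have -> : [ffun l : 'I_m => if (l < m)%N then a l else 0%N] = a.
  by apply/ffunP => l; rewrite !ffunE ltn_ord.
by [].
Qed.

Local Notation c := (yI m s0).
Definition pre (k : nat) (w : word) := forall j : 'I_q, (j < k)%N -> tnth w j = c.
Hypothesis hK : forall g (w : word) (k l : 'I_q), val l = (val k).+1 -> P (kerel F g w k l).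

Lemma tnth_wset (w : word) k b j : tnth (wset w k b) j = if j == k then b else tnth w j.
Proof. by rewrite /wset tnth_mktuple. Qed.

Lemma tnth_wswap (w : word) k l j :
  tnth (wswap w k l) j = tnth w (if j == k then l else if j == l then k else j).
Proof. by rewrite /wswap tnth_mktuple. Qed.

Lemma ipar_c : ipar c = true.
Proof. by rewrite /ipar /= leq_addr. Qed.

Section Core.
Variables (k : nat) (kk : 'I_q) (b : 'I_(m + n)) (g : Rmon) (w : word).
Hypotheses (hkk : val kk = k) (hb : b != c) (hpre : pre k w) (hwk : tnth w kk = b).
Hypothesis IH : forall g (w : word), pre k.+1 w -> P (bvec 1 g w).
Local Notation w' := (wset w kk c).
Local Notation u t := (wset w' t b).

Lemma F1 (t : 'I_q) : (t <= k)%N -> tnth w' t = c.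
Proof.
move=> tk; rewrite tnth_wset; case: eqP => // /eqP ne.
apply: hpre; rewrite ltn_neqAle tk andbT -hkk.
by apply: contra ne => /eqP E; apply/eqP/val_inj.
Qed.

Lemma F2 (t : 'I_q) : (k < t)%N -> pre k.+1 (u t).
Proof.
move=> kt j jk; rewrite tnth_wset.
have -> : (j == t) = false.
  by apply/negbTE; apply/negP => /eqP E; move: jk; rewrite E ltnS leqNgt kt.
by apply: F1; rewrite -ltnS.
Qed.

Lemma F3 : u kk = w.
Proof.
apply: eq_from_tnth => j; rewrite !tnth_wset.
by case: eqP => // ->.
Qed.

Lemma Ksw (t t' : 'I_q) : val t' = (val t).+1 -> (t' <= k)%N ->
  P (bvec 1 g (u t) + (-1) ^+ (ipar b) *: bvec 1 g (u t')).
Proof.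
move=> tt' t'k.
have := hK g (u t) tt'.
have ne : t != t'.
  by apply/negP => /eqP E; rewrite E in tt'; apply: (n_Sn _ tt').
have ne' : t' != t by rewrite eq_sym.
rewrite /kerel tnth_wset eqxx tnth_wset (negPf ne').
rewrite F1 // ipar_c andbT.
have -> : wswap (u t) t t' = u t'.
  apply: eq_from_tnth => j; rewrite tnth_wswap.
  have [->|jt] := eqVneq j t.
    rewrite !tnth_wset (negPf ne') (negPf ne).
    have h1 := F1 t'k; have h2 : (t <= k)%N by apply: leq_trans t'k; rewrite tt'.
    have h3 := F1 h2; rewrite tnth_wset in h1; rewrite tnth_wset in h3.
    by rewrite h1 h3.
  have [->|jt'] := eqVneq j t'.
    by rewrite !tnth_wset !eqxx.
  by rewrite !tnth_wset (negPf jt) (negPf jt').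
by rewrite -bvecZ.
Qed.
Lemma k_lt_q : (k < q)%N.
Proof. by rewrite -hkk ltn_ord. Qed.

Lemma K2 d : forall t : 'I_q, (val t + d = k)%N ->
  P (bvec 1 g (u t) - ((- (-1) ^+ ipar b) ^+ d) *: bvec 1 g w).
Proof.
elim: d => [|d IHd] t htd.
  have -> : t = kk by apply: val_inj; rewrite hkk -htd addn0.
  by rewrite F3 expr0 scale1r subrr; apply: P0.
have ht' : (t.+1 < q)%N.
  by apply: leq_ltn_trans k_lt_q; rewrite -htd addnS ltnS leq_addr.
pose t' := Ordinal ht'.
have h1 := IHd t' (etrans (addSnnS _ _) htd).
have t'k : (t' <= k)%N by rewrite -htd /= addnS ltnS leq_addr.
have h2 := Ksw (t := t) (t' := t') erefl t'k.
have := PB h2 (PZ ((-1) ^+ ipar b) h1).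
rewrite scalerBr opprD opprK addrA addrK scalerA.
by rewrite exprS mulNr scaleNr opprK.
Qed.

Lemma finish (coef : 'I_q -> F) (lam : F) : lam != 0 ->
  (forall t : 'I_q, (t <= k)%N -> coef t * (- (-1) ^+ ipar b) ^+ (k - t) = lam) ->
  P (\sum_(t < q | (t <= k)%N) coef t *: bvec 1 g (u t)) -> P (bvec 1 g w).
Proof.
move=> lam0 hc H.
pose e := (- (-1) ^+ ipar b : F).
have H3 : P (\sum_(t < q | (t <= k)%N) coef t *: (bvec 1 g (u t) - e ^+ (k - t) *: bvec 1 g w)).
  apply: Psum => t tk; apply: PZ; apply: (K2 (d := k - t)); exact: (subnKC tk).
have := PB H H3.
have E : \sum_(t < q | (t <= k)%N) coef t *: (bvec 1 g (u t) - e ^+ (k - t) *: bvec 1 g w)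
  = \sum_(t < q | (t <= k)%N) coef t *: bvec 1 g (u t) - \sum_(t < q | (t <= k)%N) lam *: bvec 1 g w.
  rewrite -sumrB; apply: eq_bigr => t tk.
  by rewrite scalerBr (scalerA (coef t) (e ^+ (k - t)) (bvec 1 g w)) (hc t tk).
have E2 : \sum_(t < q | (t <= k)%N) coef t *: bvec 1 g (u t) -
  \sum_(t < q | (t <= k)%N) coef t *: (bvec 1 g (u t) - e ^+ (k - t) *: bvec 1 g w)
  = \sum_(t < q | (t <= k)%N) lam *: bvec 1 g w.
  by rewrite [X in _ - X]E subsub.
move=> H4; have := @eq_ind V _ P H4 _ E2.
rewrite sumr_const.
move=> {}H4.
move: H4; set N := #|_| => H4.
have N0 : (0 < N)%N.
  apply/card_gt0P; exists kk; rewrite /in_mem /= hkk.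
  by rewrite subnn.
rewrite (scalerMnl lam (bvec 1 g w) N) in H4.
apply: (PZinv _ H4); rewrite -mulr_natr mulf_neq0 //.
by rewrite -(prednK N0) natr_neq0.
Qed.

Lemma core : P (xiV c b (1, g) w') -> P (bvec 1 g w).
Proof.
have hb' : c != b by rewrite eq_sym.
rewrite /xiV (str_ne F hb') bvec0 addr0 scale1r.
rewrite (bigID (fun t : 'I_q => (t <= k)%N)).
move=> Hx.
have H2 : P (\sum_(i < q | true && ~~ (i <= k)%N)
           (if tnth w' i == c
            then bvec ((-1) ^+ ((ipar c (+) ipar b) &&
                    odd (\sum_(l < q | (l < i)%N) ipar (tnth w' l))) *
                - (-1) ^+ ((ipar c (+) ipar b) && ipar c)) (1 : F, g).2 (u i)
            else 0)).
  apply: Psum => t /= ht; case: ifP => _; last exact: P0.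
  apply: Pbvec; apply: IH; apply: F2; by rewrite ltnNge.
have := PB Hx H2; rewrite addrK => H1.
apply: (finish (coef := fun t : 'I_q => (-1) ^+ ((ipar c (+) ipar b) &&
                    odd (\sum_(l < q | (l < t)%N) ipar (tnth w' l))) *
                - (-1) ^+ ((ipar c (+) ipar b) && ipar c))
               (lam := if ipar b then -1 else (-1) ^+ k)).
- by case: (ipar b); rewrite ?oppr_eq0 ?oner_eq0 ?signr_eq0.
- move=> t tk.
  have Hs : (\sum_(l < q | (l < t)%N) ipar (tnth w' l) = t)%N.
    rewrite (eq_bigr (fun _ => 1%N)); last first.
      by move=> l lt; rewrite F1 ?ipar_c //; apply: ltnW (leq_trans lt tk).
    apply: sum_lt; apply: leq_trans tk _; exact: (ltnW k_lt_q).
  rewrite Hs ipar_c.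
  case: (ipar b) => /=.
    by rewrite !expr0 mul1r expr1 opprK expr1n mulr1.
  by rewrite expr1 opprK mulr1 expr0 signr_odd -exprD subnKC.
- apply: (eq_ind _ P H1).
  apply: eq_big => [t //|t ht].
  rewrite (F1 ht) eqxx bvecZ.
  reflexivity.
Qed.
End Core.

Lemma PBl u v : P (u + v) -> P u -> P v.
Proof. by move=> H1 H2; have := PB H1 H2; rewrite addrC addKr. Qed.

Lemma step k : (k < q)%N -> (forall g (w : word), pre k.+1 w -> P (bvec 1 g w)) ->
  forall g (w : word), pre k w -> P (bvec 1 g w).
Proof.
move=> hk IH g w hpre.
pose kk := Ordinal hk.
have [hc|hb] := eqVneq (tnth w kk) c.
  apply: IH => j; rewrite ltnS leq_eqVlt => /orP [/eqP E|jk]; last exact: hpre.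
  by have -> : j = kk by apply: val_inj.
pose w' := wset w kk c.
have hw' : pre k.+1 w'.
  move=> j jk; rewrite tnth_wset; case: eqP => // /eqP ne.
  apply: hpre; move: jk; rewrite ltnS leq_eqVlt => /orP [/eqP E|//].
  by case/negP: ne; apply/eqP/val_inj.
apply: (core (kk := kk) erefl hb hpre erefl IH).
have [bm|bm] := ltnP (tnth w kk) m.
  pose i := Ordinal bm.
  have Eb : tnth w kk = xI n i by apply: val_inj.
  have := Pd (ymon m s0) i (IH g w' hw').
  rewrite actd_ymon => H.
  have := PBl H (Pbvec _ (IH _ _ hw')).
  rewrite Eb; apply: PZinv; exact: (negbT (signr_eq0 _ _)).
have bn : (tnth w kk - m < n)%N by rewrite ltn_subLR // -(ltn_ord (tnth w kk)).
pose s := Ordinal bn.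
have Eb : tnth w kk = yI m s by apply: val_inj; rewrite /= subnKC.
have := PDy (ymon m s0) s (IH g w' hw').
rewrite actD_ymon => H.
have := PBl H (Pbvec _ (IH _ _ hw')).
rewrite Eb; apply: PZinv; exact: (negbT (signr_eq0 _ _)).
Qed.

Lemma allH d : (d <= q)%N -> forall g (w : word), pre (q - d) w -> P (bvec 1 g w).
Proof.
elim: d => [|d IHd] hd g w hpre.
  have -> : w = cq.
    apply: eq_from_tnth => j; rewrite tnth_nseq; apply: hpre.
    by rewrite subn0 ltn_ord.
  exact: Hq.
have hk : (q - d.+1 < q)%N by rewrite -subn_gt0 subKn // ltnW.
apply: (step hk) hpre => g' w' hw'; apply: IHd; first exact: ltnW.
by move: hw'; rewrite -subSn // subSS.
Qed.

Lemma allP g (w : word) : P (bvec 1 g w).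
Proof. by apply: (allH (leqnn q)) => j; rewrite subnn ltn0. Qed.
End Main.

Theorem mainTheorem10 (F : closedFieldType) (HF : [pchar F]%R =i pred0)
  (m n : nat) (Hm : (0 < m)%N) (Hn : (0 < n)%N) (q : nat) :
  generates_Vtheta (gen_vec F m q Hn).
Proof.
move=> P hP hK hv0 v.
have hs0 : (n.-1 < n)%N by rewrite prednK.
pose s0 := Ordinal hs0.
pose i0 := Ordinal Hm.
have Ev : gen_vec F m q Hn = bvec 1 (ymon m s0) [tuple of nseq q (yI m s0)].
  rewrite /gen_vec /ymon.
  have -> : [set s : 'I_n | val s == n.-1] = [set s0].
    by apply/setP => s; rewrite !inE.
  have -> : Defs.lastI m Hn = yI m s0.
    by apply: val_inj; rewrite /= -!subn1 addnBA.
  reflexivity.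
rewrite Ev in hv0.
rewrite (monalgE v); apply: (Psum hP) => -[g w] _.
change (P (bvec (v@_(g, w)) g w)); apply: (Pbvec hP).
exact: (allP HF hP i0 hv0 hK).
Qed.
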